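(* Let $\boldsymbol\mu>\mathbf 0$ and let $\hat{\mathbf G},\tilde{\mathbf G}\in\mathcal G(\boldsymbol\mu)$ correspond to choices $(\hat k_1,\dots,\hat k_N)$ and $(\tilde k_1,\dots,\tilde k_N)$ that differ in exactly one index $i$ (i.e. $\hat k_i\neq\tilde k_i$ and $\hat k_j=\tilde k_j$ for $j\neq i$). Assume $\mathbf I-\hat{\mathbf G}$ and $\mathbf I-\tilde{\mathbf G}$ are irreducible and $\lambda(\mathbf I-\hat{\mathbf G})<1$, $\lambda(\mathbf I-\tilde{\mathbf G})<1$, and let $\hat{\mathbf p}=\hat{\mathbf G}^{-1}\mathbf n_{\hat{\mathbf G}}$, $\tilde{\mathbf p}=\tilde{\mathbf G}^{-1}\mathbf n_{\tilde{\mathbf G}}$. Then there exists $\mathbf p\in\{\hat{\mathbf p},\tilde{\mathbf p}\}$ such that $\hat{\mathbf G}\mathbf p\geq\mathbf n_{\hat{\mathbf G}}$ and $\tilde{\mathbf G}\mathbf p\geq\mathbf n_{\tilde{\mathbf G}}$.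
   Context: Multicast system: $N$ transmitters; transmitter $T_i$ has $K_i\geq1$ receivers $R_i^{k}$, $k\in\mathcal K_i=\{1,\dots,K_i\}$. Channel gains $g_{r_i^{k},t_j}\geq 0$ (from $T_j$ to $R_i^k$) with $g_{r_i^{k},t_i}>0$; noise variance $\sigma^2>0$. For $\boldsymbol\mu\in\mathbb R^N$, $\mathbf a_i^{k}(\boldsymbol\mu)\in\mathbb R^{1\times N}$ is the row vector with $i$-th entry $1$ and $j$-th entry $-\mu_i g_{r_i^{k},t_j}/g_{r_i^{k},t_i}$ for $j\neq i$; $n_i^{k}(\boldsymbol\mu)=\mu_i\sigma^2/g_{r_i^{k},t_i}$. $\mathcal G(\boldsymbol\mu)$ is the set of $N\times N$ matrices whose $i$-th row is $\mathbf a_i^{k_i}(\boldsymbol\mu)$ for a choice $k_i\in\mathcal K_i$ ($i=1,\dots,N$); for such $\mathbf G$, $\mathbf n_{\mathbf G}=(n_1^{k_1}(\boldsymbol\mu),\dots,n_N^{k_N}(\boldsymbol\mu))^T$. $\lambda(\cdot)$ is the Perron–Frobenius eigenvalue (spectral radius). Inequalities are componentwise. *)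

(* Defs.v *)
(* Scalars range over an arbitrary real closed field R
   (the paper works over the reals). *)
From HB Require Import structures.
From mathcomp Require Import all_boot all_order all_algebra.
Set Implicit Arguments. Unset Strict Implicit. Unset Printing Implicit Defensive.
Import Order.TTheory GRing.Theory Num.Theory.
Local Open Scope ring_scope.

Section Multicast.
Variable R : rcfType.
Variable N : nat.

(* Perron--Frobenius eigenvalue of a (nonnegative) square matrix A:
   the largest real eigenvalue of A.  For a nonnegative matrix this is
   the spectral radius (Perron--Frobenius theorem). *)
Definition is_PF_eigenvalue (A : 'M[R]_N) (r : R) : Prop :=
  eigenvalue A r /\ (forall s, eigenvalue A s -> s <= r).

Definition PF_lt1 (A : 'M[R]_N) : Prop :=
  exists r, is_PF_eigenvalue A r /\ r < 1.

Definition irreducible_mx (A : 'M[R]_N) : Prop :=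
  forall i j : 'I_N, connect (fun i j : 'I_N => A i j != 0) i j.

(* Data: K i receivers for transmitter i; g i k j = gain from T_j to R_i^k *)
Variable K : 'I_N -> nat.
Variable g : forall i : 'I_N, 'I_(K i) -> 'I_N -> R.
Variable sigma2 : R.

Definition a_row (mu : 'I_N -> R) (i : 'I_N) (k : 'I_(K i)) : 'rV[R]_N :=
  \row_j (if j == i then 1 else - (mu i * g k j / g k i)).

Definition n_entry (mu : 'I_N -> R) (i : 'I_N) (k : 'I_(K i)) : R :=
  mu i * sigma2 / g k i.

(* the matrix G in G(mu) associated with a choice (k_1,...,k_N) *)
Definition Gmat (mu : 'I_N -> R) (c : forall i : 'I_N, 'I_(K i)) : 'M[R]_N :=
  \matrix_(i, j) a_row mu (c i) 0 j.

Definition nvec (mu : 'I_N -> R) (c : forall i : 'I_N, 'I_(K i)) : 'cV[R]_N :=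
  \col_i n_entry mu (c i).

End Multicast.

(* Main.v *)
Require Import Defs.
From HB Require Import structures.
From mathcomp Require Import all_boot all_order all_algebra.
From mathcomp Require Import polyrcf.
Import Order.TTheory GRing.Theory Num.Theory.
Local Open Scope ring_scope.

Lemma horner_char (F : fieldType) n (A : 'M[F]_n) a :
  (char_poly A).[a] = \det (a%:M - A).
Proof.
rewrite /char_poly /determinant horner_sum; apply: eq_bigr => s _.
rewrite hornerM horner_exp !hornerE; congr (_ * _).
rewrite (big_morph _ (fun p q => hornerM p q a) (hornerC 1 a)).
by apply: eq_bigr => i _; rewrite !mxE !(hornerE, hornerMn).
Qed.

Lemma det_pos (R : rcfType) n (G : 'M[R]_n) : PF_lt1 (1%:M - G) -> 0 < \det G.
Proof.
move=> [r [[_ Hr] r1]].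
set A := 1%:M - G.
have hG : G = 1%:M - A by rewrite /A opprB addrC subrK.
rewrite hG -horner_char ltNge; apply/negP => hle.
have lc : lead_coef (char_poly A) = 1 by apply/monicP/char_poly_monic.
have [n0 Hn0] : exists n0, forall x, n0 <= x -> lead_coef (char_poly A) <= (char_poly A).[x] by apply: poly_pinfty_gt_lc; rewrite lc ltr01.
set b := Num.max 1 n0.
have h1b : 1 <= b by rewrite le_max lexx.
have hb : 0 <= (char_poly A).[b].
  apply: le_trans (Hn0 b _); first by rewrite lc ler01.
  by rewrite le_max lexx orbT.
have [x /andP[hx1 _] hroot] := @poly_ivt R (char_poly A) 1 b h1b (introT andP (conj hle hb)).
have := Hr x; rewrite eigenvalue_root_char => /(_ hroot) hxr.
by move: (le_lt_trans (le_trans hx1 hxr) r1); rewrite ltxx.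
Qed.

Theorem lemma2 (R : rcfType) (N : nat) (K : 'I_N -> nat)
    (g : forall i : 'I_N, 'I_(K i) -> 'I_N -> R) (sigma2 : R)
    (hK : forall i, (0 < K i)%N)
    (hg : forall i (k : 'I_(K i)) j, 0 <= g i k j)
    (hgii : forall i (k : 'I_(K i)), 0 < g i k i)
    (hsigma : 0 < sigma2)
    (mu : 'I_N -> R) (hmu : forall i, 0 < mu i)
    (khat ktil : forall i : 'I_N, 'I_(K i))
    (hdiff : exists i, khat i != ktil i /\ (forall j, j != i -> khat j = ktil j))
    (hirr1 : irreducible_mx (1%:M - Gmat g mu khat))
    (hirr2 : irreducible_mx (1%:M - Gmat g mu ktil))
    (hpf1 : PF_lt1 (1%:M - Gmat g mu khat))
    (hpf2 : PF_lt1 (1%:M - Gmat g mu ktil)) :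
  let phat := invmx (Gmat g mu khat) *m nvec g sigma2 mu khat in
  let ptil := invmx (Gmat g mu ktil) *m nvec g sigma2 mu ktil in
  exists p, (p = phat \/ p = ptil) /\
    (forall r : 'I_N, nvec g sigma2 mu khat r 0 <= (Gmat g mu khat *m p) r 0) /\
    (forall r : 'I_N, nvec g sigma2 mu ktil r 0 <= (Gmat g mu ktil *m p) r 0).
Proof.
move=> ph pt.
have [i [_ hj]] := hdiff.
set Gh := Gmat g mu khat; set Gt := Gmat g mu ktil.
set nh := nvec g sigma2 mu khat; set nt := nvec g sigma2 mu ktil.
have dh : 0 < \det Gh := @det_pos _ _ _ hpf1.
have dt : 0 < \det Gt := @det_pos _ _ _ hpf2.
have eqrow : forall j r, j != i -> Gh j r = Gt j r.
  by move=> j r /hj hjj; rewrite /Gh /Gt !mxE hjj.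
have eqn : forall j, j != i -> nh j 0 = nt j 0.
  by move=> j /hj hjj; rewrite /nh /nt !mxE hjj.
have rowmul : forall j (p : 'cV[R]_N), j != i -> (Gt *m p) j 0 = (Gh *m p) j 0.
  by move=> j p hji; rewrite !mxE; apply: eq_bigr => k _; rewrite eqrow.
have uh : Gh \in unitmx by rewrite unitmxE unitfE gt_eqF.
have ut : Gt \in unitmx by rewrite unitmxE unitfE gt_eqF.
have Hph : Gh *m ph = nh by rewrite /ph mulmxA mulmxV // mul1mx.
have Hpt : Gt *m pt = nt by rewrite /pt mulmxA mulmxV // mul1mx.
have [hs|hs] := lerP 0 ((Gt *m ph) i 0 - nt i 0).
  exists ph; split; first by left.
  split=> r; first by rewrite Hph.
  have [->|hri] := eqVneq r i; first by rewrite -subr_ge0.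
  by rewrite rowmul // Hph eqn.
exists pt; split; first by right.
split=> r; last by rewrite Hpt.
have [->|hri] := eqVneq r i; last by rewrite -rowmul // Hpt eqn.
set c := nh i 0 - (Gh *m pt) i 0.
set e : 'cV[R]_N := delta_mx i 0.
set u := invmx Gh *m e.
have S1 : Gh *m pt = nh - c *: e.
  apply/matrixP => r0 z; rewrite (ord1 z); set L := (Gh *m pt) r0 0; set M := nh r0 0; rewrite !mxE eqxx andbT {}/L {}/M.
  have [->|hri] := eqVneq r0 i.
    by rewrite mulr1 /c /nh [in RHS]mxE opprB addrC subrK.
  by rewrite mulr0 subr0 -rowmul // Hpt -eqn // /nh mxE.
have S2 : pt = ph - c *: u.
  by rewrite -(mulKmx uh pt) S1 mulmxBr scalemxAr.
have Hu : Gh *m u = e by rewrite mulmxA mulmxV // mul1mx.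
set D := Gt - Gh.
have hGu : (Gt *m u) i 0 = 1 + (D *m u) i 0.
  rewrite /D mulmxBl Hu; set X := Gt *m u.
  by rewrite !mxE eqxx /= addrCA subrr addr0.
have E1 : (Gt *m pt) i 0 = (Gt *m ph) i 0 - c * (Gt *m u) i 0.
  by rewrite S2 mulmxBr -scalemxAr !mxE.
have S3 : (Gt *m ph) i 0 - nt i 0 = c * (1 + (D *m u) i 0).
  rewrite -hGu; have := E1; rewrite Hpt => ->.
  by rewrite opprB addrC subrK.
have S4 : (D *m u) i 0 * \det Gh = \det Gt - \det Gh.
  have cof : forall j, cofactor Gt i j = cofactor Gh i j.
    move=> j; rewrite /cofactor; congr (_ * \det _).
    apply/matrixP => a b; have hl : lift i a != i by rewrite eq_sym neq_lift.
    by rewrite !mxE (hj _ hl).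
  clearbody Gt Gh.
  rewrite (expand_det_row Gt i) [in RHS](expand_det_row Gh i) -sumrB mxE mulr_suml.
  apply: eq_bigr => j _.
  rewrite /u -colE /invmx uh !mxE cof.
  rewrite -mulrA [(_ * cofactor _ _ _) * _]mulrC mulVKf ?gt_eqF //.
  by rewrite mulrBl.
have key : c * \det Gt = ((Gt *m ph) i 0 - nt i 0) * \det Gh.
  by rewrite S3 -mulrA (mulrDl 1 _ (\det Gh)) mul1r S4 addrC subrK.
have hc : c <= 0.
  rewrite leNgt; apply/negP => hc.
  have : 0 < c * \det Gt by rewrite mulr_gt0.
  by rewrite key pmulr_lgt0 // ltNge (ltW hs).
by move: hc; rewrite /c subr_le0.
Qed.
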